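(* Let $T:M_d\to M_d$ be completely positive with $T(I)\le I$ and finite stabilization index $n_T$, and let $Q_T$ be its orbit-support projection. Suppose that for every nonzero projection $0\ne p\le Q_T$ we have $T(p)\ne0$. Then $T$ is corner-faithful, and hence $T$ is unital ($T(I)=I$).
   Context: $d(T)=I-T(I)$; the stabilization index is $n_T=\min\{n\ge1: T^n(d(T))=0\}$. For positive semidefinite $x$, $\mathrm{supp}(x)$ is the orthogonal projection onto the range of $x$. The orbit-support projection is $Q_T=\bigvee_{k<n_T}\mathrm{supp}(T^k(d(T)))$. $T$ is corner-faithful if every $x\ge0$, $x\ne0$ with $\mathrm{supp}(x)\le Q_T$ satisfies $T(x)\ne0$. *)

(* Defs.v *)
(* Complex matrix algebra M_d is modelled as 'M[C]_d with
   C an arbitrary numClosedFieldType (e.g. algC, or complex R for R realType).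
   Convention: matrices act on row vectors (v |-> v *m A), as in mathcomp. *)
From HB Require Import structures.
From mathcomp Require Import all_boot all_order all_algebra.
From mathcomp Require Import sesquilinear spectral.
Set Implicit Arguments. Unset Strict Implicit. Unset Printing Implicit Defensive.
Import Order.TTheory GRing.Theory Num.Theory.
Local Open Scope ring_scope.
Local Open Scope sesquilinear_scope.

Section Defs.
Variable C : numClosedFieldType.

Definition psd n (A : 'M[C]_n) : Prop :=
  A ^t* = A /\ forall v : 'rV[C]_n, 0 <= (v *m A *m v ^t*) 0 0.

Definition loewner_le n (A B : 'M[C]_n) : Prop := psd (B - A).

Definition is_proj n (P : 'M[C]_n) : Prop := P *m P = P /\ P ^t* = P.

Definition supp n (x : 'M[C]_n) : 'M[C]_n := proj_ortho x.

Definition pjoin n (P Q : 'M[C]_n) : 'M[C]_n := proj_ortho (P + Q)%MS.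

Definition completely_positive d (T : 'M[C]_d -> 'M[C]_d) : Prop :=
  forall (k : nat) (A : 'I_k -> 'I_k -> 'M[C]_d),
    psd (\mxblock_(i < k, j < k) A i j) ->
    psd (\mxblock_(i < k, j < k) T (A i j)).

Definition defect d (T : 'M[C]_d -> 'M[C]_d) : 'M[C]_d := 1%:M - T 1%:M.

Definition is_stab_index d (T : 'M[C]_d -> 'M[C]_d) (n : nat) : Prop :=
  (1 <= n)%N /\ iter n T (defect T) = 0 /\
  forall m, (1 <= m)%N -> iter m T (defect T) = 0 -> (n <= m)%N.

Definition orbit_supp d (T : 'M[C]_d -> 'M[C]_d) (n : nat) : 'M[C]_d :=
  \big[@pjoin d/0]_(k < n) supp (iter k T (defect T)).

(* corner-faithful (defined when n_T is finite) *)
Definition corner_faithful d (T : 'M[C]_d -> 'M[C]_d) : Prop :=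
  forall n, is_stab_index T n ->
  forall x : 'M[C]_d, psd x -> x <> 0 ->
    loewner_le (supp x) (orbit_supp T n) -> T x <> 0.

End Defs.

(* Main.v *)
Require Import Defs.
From HB Require Import structures.
From mathcomp Require Import all_boot all_order all_algebra.
From mathcomp Require Import sesquilinear spectral.
From mathcomp Require Import ring.
Set Implicit Arguments. Unset Strict Implicit. Unset Printing Implicit Defensive.
Import Order.TTheory GRing.Theory Num.Theory.
Local Open Scope ring_scope.
Local Open Scope sesquilinear_scope.

Section Aux.
Variable C : numClosedFieldType.

Lemma adjM m n p (A : 'M[C]_(m, n)) (B : 'M[C]_(n, p)) :
  (A *m B)^t* = B^t* *m A^t*.
Proof. by rewrite trmx_mul map_mxM. Qed.

Lemma adjD m n (A B : 'M[C]_(m, n)) : (A + B)^t* = A^t* + B^t*.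
Proof. by rewrite linearD map_mxD. Qed.

Lemma adjB m n (A B : 'M[C]_(m, n)) : (A - B)^t* = A^t* - B^t*.
Proof. by rewrite linearB map_mxB. Qed.

Lemma adjZ m n (a : C) (A : 'M[C]_(m, n)) : (a *: A)^t* = a^* *: A^t*.
Proof. by rewrite linearZ map_mxZ. Qed.

Lemma adj1 n : (1%:M : 'M[C]_n)^t* = 1%:M.
Proof. by rewrite trmx1 map_mx1. Qed.

Lemma adj0 m n : (0 : 'M[C]_(m, n))^t* = 0.
Proof. by rewrite trmx0 map_mx0. Qed.

Lemma adj_sum m n (I : finType) (F : I -> 'M[C]_(m, n)) :
  (\sum_i F i)^t* = \sum_i (F i)^t*.
Proof. by rewrite raddf_sum raddf_sum. Qed.

Lemma normsq_ge0 n (w : 'rV[C]_n) : 0 <= (w *m w^t*) 0 0.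
Proof.
rewrite mxE sumr_ge0 // => i _; rewrite !mxE mul_conjC_ge0 //.
Qed.

Definition qf n (B : 'M[C]_n) (u w : 'rV[C]_n) : C := (u *m B *m w^t*) 0 0.

Lemma qf_expand n (B : 'M[C]_n) u w (t : C) :
  qf B (u + t *: w) (u + t *: w) =
  qf B u u + t^* * qf B u w + t * qf B w u + t * t^* * qf B w w.
Proof.
rewrite /qf adjD adjZ !(mulmxDl, mulmxDr) -!scalemxAl -!scalemxAr !mxE.
ring.
Qed.

Lemma qf_delta n (B : 'M[C]_n) i j : qf B (delta_mx 0 i) (delta_mx 0 j) = B i j.
Proof.
rewrite /qf -rowE.
have -> : (delta_mx 0 j : 'rV[C]_n)^t* = delta_mx j 0.
  by apply/matrixP => a b; rewrite !mxE andbC conjC_nat.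
rewrite mxE (bigD1 j) //= big1 ?mxE ?eqxx ?mulr1 ?addr0 // => k kj.
by rewrite !mxE; case: eqP kj => [->|]; rewrite ?eqxx // mulr0.
Qed.

Lemma qf_zero n (B : 'M[C]_n) : (forall v, qf B v v = 0) -> B = 0.
Proof.
move=> H; apply/matrixP => i j; rewrite mxE -qf_delta.
set u := delta_mx 0 i; set w := delta_mx 0 j.
have h1 := qf_expand B u w 1; have h2 := qf_expand B u w 'i.
rewrite !H rmorph1 !mul1r !add0r addr0 in h1.
rewrite !H conjCi in h2.
have e : qf B w u = - qf B u w.
  by apply/eqP; rewrite -subr_eq0 opprK addrC -h1.
have h3 : - ('i * qf B u w) *+ 2 = 0 + - 'i * qf B u w + 'i * - qf B u w + 'i * - 'i * 0 by ring.
rewrite -e -h2 in h3.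
by move/eqP: h3; rewrite mulrn_eq0 /= oppr_eq0 mulf_eq0 (negbTE (neq0Ci _)) => /eqP.
Qed.

Lemma qf_adj n (A : 'M[C]_n) v : qf (A^t*) v v = (qf A v v)^*.
Proof.
rewrite /qf.
have -> : v *m A^t* *m v^t* = (v *m A *m v^t*)^t* by rewrite !adjM trmxCK mulmxA.
by rewrite !mxE.
Qed.

Lemma psd_quad n (A : 'M[C]_n) : (forall v, 0 <= qf A v v) -> psd A.
Proof.
move=> H; split => [|v]; last exact: H.
apply/eqP; rewrite eq_sym -subr_eq0; apply/eqP/qf_zero => v.
rewrite /qf mulmxBr mulmxBl.
have -> : (v *m A *m v^t* - v *m A^t* *m v^t*) 0 0 = qf A v v - qf (A^t*) v v.
  by rewrite /qf [LHS]mxE [X in _ + X]mxE.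
by rewrite qf_adj conj_Creal ?subrr // ger0_real // H.
Qed.

Lemma psd_qf n (A : 'M[C]_n) : psd A -> forall v, 0 <= qf A v v.
Proof. by case. Qed.

Lemma adj_mxrow k d (V : 'I_k -> 'rV[C]_d) :
  (\mxrow_i V i)^t* = \mxcol_i (V i)^t*.
Proof. by rewrite tr_mxrow; apply/matrixP => a b; rewrite !mxE. Qed.

Lemma block_qf k d (B : 'I_k -> 'I_k -> 'M[C]_d) (V : 'I_k -> 'rV[C]_d) :
  (\mxrow_i V i) *m (\mxblock_(i < k, j < k) B i j) *m (\mxrow_i V i)^t*
  = \sum_i \sum_j (V i *m B i j *m (V j)^t*).
Proof.
rewrite mul_mxrow_mxblock adj_mxrow mul_mxrow_mxcol exchange_big /=.
by apply: eq_bigr => j _; rewrite mulmx_suml.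
Qed.

Lemma psd_block_conj k d (x : 'M[C]_d) (a : 'I_k -> 'M[C]_d) :
  psd x -> psd (\mxblock_(i < k, j < k) (a i *m x *m (a j)^t*)).
Proof.
move=> px; apply: psd_quad => v.
rewrite /qf -(submxrowK v) block_qf.
set V := submxrow v.
set w := \sum_i V i *m a i.
have -> : \sum_i \sum_j (V i *m (a i *m x *m (a j)^t*) *m (V j)^t*)
    = w *m x *m w^t*.
  rewrite /w adj_sum mulmx_suml mulmx_suml; apply: eq_bigr => i _.
  rewrite mulmx_sumr; apply: eq_bigr => j _.
  by rewrite adjM !mulmxA.
exact: (psd_qf px).
Qed.

Definition V2 d (u w : 'rV[C]_d) (i : 'I_2) := if i == ord0 then u else w.

Lemma block2_qf d (B : 'I_2 -> 'I_2 -> 'M[C]_d) u w :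
  qf (\mxblock_(i < 2, j < 2) B i j) (\mxrow_i V2 u w i) (\mxrow_i V2 u w i) =
  qf (B ord0 ord0) u u + qf (B ord0 ord_max) u w + qf (B ord_max ord0) w u
  + qf (B ord_max ord_max) w w.
Proof.
rewrite /qf block_qf !big_ord_recl !big_ord0 !addr0.
have E : lift ord0 (ord0 : 'I_1) = ord_max :> 'I_2 by apply/val_inj.
rewrite !E /V2 /= !mxE; ring.
Qed.

Lemma qfZl n (B : 'M[C]_n) t u w : qf B (t *: u) w = t * qf B u w.
Proof. by rewrite /qf -!scalemxAl mxE. Qed.

Lemma qfZr n (B : 'M[C]_n) t u w : qf B u (t *: w) = t^* * qf B u w.
Proof. by rewrite /qf adjZ -!scalemxAr mxE. Qed.

Lemma scal0 (a c : C) : (forall r : C, 0 <= r -> 0 <= a + r * c) ->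
  (forall r, 0 <= r -> 0 <= a - r * c) -> c = 0.
Proof.
move=> H1 H2.
have a0 : 0 <= a by have := H1 0 (lexx 0); rewrite mul0r addr0.
have cR : c \is Num.real.
  have -> : c = (a + c) - a by ring.
  by rewrite realB ?ger0_real // -[c]mul1r H1.
case: (real_ltgtP cR (@real0 _)) => // c0.
- have c0' : c != 0 by rewrite lt_eqF.
  have r0 : 0 <= (a + 1) / (- c).
    by apply: divr_ge0; [rewrite addr_ge0 // ler01 | rewrite oppr_ge0 ltW].
  have := H1 _ r0.
  have -> : a + (a + 1) / - c * c = -1 by field.
  by rewrite oppr_ge0 ler10.
- have c0' : c != 0 by rewrite gt_eqF.
  have r0 : 0 <= (a + 1) / c.
    by apply: divr_ge0; [rewrite addr_ge0 // ler01 | rewrite ltW].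
  have := H2 _ r0.
  have -> : a - (a + 1) / c * c = -1 by field.
  by rewrite oppr_ge0 ler10.
Qed.

Lemma block2_zero d (B : 'I_2 -> 'I_2 -> 'M[C]_d) :
  psd (\mxblock_(i < 2, j < 2) B i j) -> B ord_max ord_max = 0 ->
  B ord0 ord_max = 0.
Proof.
move=> pB B11; apply/matrixP => i j; rewrite mxE -qf_delta.
set u := delta_mx 0 i; set w := delta_mx 0 j.
set a := qf (B ord0 ord0) u u.
set s := qf (B ord0 ord_max) u w; set s' := qf (B ord_max ord0) w u.
have F : forall t : C, 0 <= a + t^* * s + t * s'.
  move=> t; have := psd_qf pB (\mxrow_i V2 u (t *: w) i).
  rewrite block2_qf B11 qfZr qfZl.
  by rewrite (_ : qf 0 _ _ = 0) ?addr0 // /qf mulmx0 mul0mx mxE.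
have rR : forall r : C, 0 <= r -> r^* = r.
  by move=> r r0; rewrite conj_Creal // ger0_real.
have e1 : s + s' = 0.
  apply: (scal0 (a := a)) => r r0.
    have := F r; rewrite rR //.
    by have -> : a + r * s + r * s' = a + r * (s + s') by ring.
  have := F (- r); rewrite raddfN /= rR //.
  by have -> : a + - r * s + - r * s' = a - r * (s + s') by ring.
have e2 : 'i * (s' - s) = 0.
  apply: (scal0 (a := a)) => r r0.
    have := F ('i * r); rewrite rmorphM /= (@conjCi C) rR //.
    by have -> : a + - 'i * r * s + 'i * r * s' = a + r * ('i * (s' - s)) by ring.
  have := F (- ('i * r)); rewrite raddfN /= rmorphM /= (@conjCi C) rR //.
  by have -> : a + - (- 'i * r) * s + - ('i * r) * s' = a - r * ('i * (s' - s)) by ring.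
move/eqP: e2; rewrite mulf_eq0 (negbTE (neq0Ci _)) /= subr_eq0 => /eqP e2.
move/eqP: e1; rewrite e2 -mulr2n mulrn_eq0 /=; exact/eqP.
Qed.

Lemma cp_psd d (T : {linear 'M[C]_d -> 'M[C]_d}) (x : 'M[C]_d) :
  completely_positive T -> psd x -> psd (T x).
Proof.
move=> cpT px.
have := cpT 2 (fun i j => (fun _ => 1%:M) i *m x *m ((fun _ => 1%:M) j)^t*)
  (psd_block_conj _ px).
rewrite adj1 mul1mx mulmx1 => pB.
apply: psd_quad => v.
have := psd_qf pB (\mxrow_i V2 v 0 i).
rewrite block2_qf.
have q0 : forall B (u : 'rV[C]_d), qf B u 0 = 0 by move=> B u; rewrite /qf adj0 mulmx0 mxE.
have q0' : forall B (u : 'rV[C]_d), qf B 0 u = 0 by move=> B u; rewrite /qf !mul0mx mxE.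
by rewrite !q0 !q0' !addr0.
Qed.

Lemma cp_kill d (T : {linear 'M[C]_d -> 'M[C]_d}) (x : 'M[C]_d) :
  completely_positive T -> psd x -> T x = 0 -> forall D, T (D *m x) = 0.
Proof.
move=> cpT px Tx D.
pose a := fun i : 'I_2 => if i == ord0 then D else 1%:M.
have := cpT 2 (fun i j => a i *m x *m (a j)^t*) (psd_block_conj _ px).
move/block2_zero; rewrite /a /= adj1 mul1mx !mulmx1; exact.
Qed.

Lemma proj_ortho_adj m n (U : 'M[C]_(m, n)) : (proj_ortho U)^t* = proj_ortho U.
Proof.
set P := proj_ortho U.
have h1 := proj_ortho_compl_sub U (1%:M : 'M[C]_n).
move/orthomx1P: h1; rewrite mul1mx => h1.
have h2 := proj_ortho_sub U (1%:M : 'M[C]_n).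
rewrite mul1mx in h2; case/submxP: h2 => D hD.
rewrite -/P in h1 hD.
have h3 : (1%:M - P) *m P^t* = 0 by rewrite {2}hD adjM mulmxA h1 mul0mx.
have h4 : P^t* = P *m P^t*.
  by apply/eqP; rewrite -subr_eq0 -[X in X - _]mul1mx -mulmxBl h3.
have := congr1 (fun M => M^t*) h4; rewrite /= trmxCK adjM trmxCK => h5.
by rewrite h4 -h5.
Qed.

Lemma supp_is_proj d (x : 'M[C]_d) : is_proj (supp x).
Proof. by split; [exact: proj_ortho_proj | exact: proj_ortho_adj]. Qed.

Lemma psd_proj d (E : 'M[C]_d) : E *m E = E -> E^t* = E -> psd E.
Proof.
move=> EE Eh; apply: psd_quad => v.
rewrite /qf -{1}EE -{2}Eh mulmxA -mulmxA -adjM; exact: normsq_ge0.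
Qed.

Lemma loewner_proj d m1 m2 (W : 'M[C]_(m1, d)) (U : 'M[C]_(m2, d)) :
  (W <= U)%MS -> loewner_le (proj_ortho W) (proj_ortho U).
Proof.
move=> WU; set P := proj_ortho W; set Q := proj_ortho U.
have PW : (P <= W)%MS by rewrite proj_orthoE.
have PQ : P *m Q = P by apply: proj_ortho_id; exact: submx_trans WU.
have PA : P^t* = P by exact: proj_ortho_adj.
have QA : Q^t* = Q by exact: proj_ortho_adj.
have QP : Q *m P = P.
  by have := congr1 (fun M => M^t*) PQ; rewrite /= adjM PA QA.
have QQ : Q *m Q = Q by exact: proj_ortho_proj.
have PP : P *m P = P by exact: proj_ortho_proj.
apply: psd_proj; last by rewrite adjB PA QA.
by rewrite mulmxBl !mulmxBr QQ QP PQ PP subrr subr0.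
Qed.
End Aux.

Lemma big_pjoin_ub (C : numClosedFieldType) d n (F : nat -> 'M[C]_d) k :
  (k < n)%N -> (F k <= \big[@pjoin C d/0]_(i < n) F i)%MS.
Proof.
elim: n F k => [|n IH] F k //; rewrite big_ord_recl /pjoin proj_orthoE.
case: k => [_|k]; first exact: addsmxSl.
rewrite ltnS => kn; apply: submx_trans (addsmxSr _ _).
have -> : \big[@pjoin C d/0]_(i < n) F (@lift n.+1 ord0 i)
  = \big[@pjoin C d/0]_(i < n) (fun j => F j.+1) i by [].
exact: (IH (fun j => F j.+1)).
Qed.

Unset Implicit Arguments.

Theorem proposition4p20 (C : numClosedFieldType) (d : nat)
  (T : {linear 'M[C]_d -> 'M[C]_d}) (nT : nat) :
  completely_positive T ->
  loewner_le (T 1%:M) 1%:M ->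
  is_stab_index T nT ->
  (forall p : 'M[C]_d, is_proj p -> p <> 0 ->
     loewner_le p (orbit_supp T nT) -> T p <> 0) ->
  corner_faithful T /\ T 1%:M = 1%:M.
Proof.
move=> cpT hle [n1 [hn hmin]] Hp.
have kill : forall x, psd x -> x <> 0 -> loewner_le (supp x) (orbit_supp T nT) ->
    T x <> 0.
  move=> x px x0 hl Tx0; apply: (Hp (supp x) (supp_is_proj x)) => //.
    move=> s0; apply: x0; apply/eqP; rewrite -submx0.
    have : (x <= supp x)%MS by rewrite /supp proj_orthoE.
    by rewrite s0.
  have : (supp x <= x)%MS by rewrite /supp proj_orthoE.
  by case/submxP => D ->; apply: cp_kill.
split.
  move=> n' [n1' [hn' hmin']] x px x0 hl.
  have e : n' = nT by apply/eqP; rewrite eqn_leq hmin' // hmin.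
  by rewrite e in hl; apply: kill.
have ipsd : forall k, psd (iter k T (defect T)).
  by elim=> [|k IH] //=; apply: cp_psd.
case: nT hn hmin Hp kill n1 => // m hn hmin Hp kill _.
have Tx : T (iter m T (defect T)) = 0 by exact: hn.
case: (eqVneq (iter m T (defect T)) 0) => [x0|x0].
  case: m hn hmin Hp kill Tx x0 => [|m] hn hmin Hp kill Tx x0.
    by move: x0; rewrite /= /defect => /eqP; rewrite subr_eq0 eq_sym => /eqP.
  by have := hmin m.+1 isT x0; rewrite ltnn.
exfalso; apply: (kill _ (ipsd m)) => //; first exact/eqP.
have hx : (iter m T (defect T) <= orbit_supp T m.+1)%MS.
  apply: submx_trans (big_pjoin_ub (fun k => supp (iter k T (defect T))) (ltnSn m)).
  by rewrite /supp proj_orthoE.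
move: hx; rewrite /orbit_supp big_ord_recl /pjoin => hx.
rewrite /supp; apply: loewner_proj.
by move: hx; rewrite proj_orthoE.
Qed.
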